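(* Let $K = \mathbb{Q}(\sqrt{-7})$, $\theta = \frac{1+\sqrt{-7}}{2}$ and $\theta' = 1 - \theta = \frac{1-\sqrt{-7}}{2}$, viewed in the ring of integers $\mathcal{O}_K$. Let $m_1, m_2 \in \mathbb{N}$ be odd with $m_1 \geq 3$, $m_2 \geq 3$ and $m_1 \equiv m_2 \pmod{42}$, and suppose $1 - 2\theta = \theta^{m_1} - \theta'^{m_1}$ and $1 - 2\theta = \theta^{m_2} - \theta'^{m_2}$. Then $m_1 = m_2$.
   Context: $\sqrt{-7}$ is a fixed square root of $-7$ in $K$; $\theta$ is a root of $X^2 - X + 2$ and lies in $\mathcal{O}_K$. *)

(* Defs.v *)
From mathcomp Require Import all_boot all_order all_algebra all_field.
Set Implicit Arguments. Unset Strict Implicit. Unset Printing Implicit Defensive.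
Import Order.TTheory GRing.Theory Num.Theory.
Local Open Scope ring_scope.

(* K = Q(sqrt(-7)) is realised inside the algebraic numbers algC;
   sqrt7i is a fixed square root of -7. O_K = Z[theta] is a subring of algC,
   so equalities in O_K are equalities in algC. *)
Definition sqrt7i : algC := sqrtC (- 7%:R).
Definition theta : algC := (1 + sqrt7i) / 2%:R.
Definition theta' : algC := 1 - theta.

(* Main.v *)
Require Import Defs.
From mathcomp Require Import all_boot all_order all_algebra all_field.
Import GRing.Theory Num.Theory.
Local Open Scope ring_scope.
From mathcomp Require Import ring.

Fixpoint up (n : nat) : int * int :=
  if n is n'.+1 then let p := up n' in (p.2, p.2 - 2 * p.1) else (0, 1).
Fixpoint vp (n : nat) : int * int :=
  if n is n'.+1 then let p := vp n' in (p.2, p.2 - 2 * p.1) else (2, 1).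
Definition u n := (up n).1.
Definition v n := (vp n).1.

Lemma uS n : u n.+2 = u n.+1 - 2 * u n.
Proof. by rewrite /u /=. Qed.
Lemma vS n : v n.+2 = v n.+1 - 2 * v n.
Proof. by rewrite /v /=. Qed.

Lemma s2 : sqrt7i ^+ 2 = - 7%:R.
Proof. by rewrite /sqrt7i sqrtCK. Qed.

Lemma s_neq0 : sqrt7i != 0.
Proof.
apply/eqP => h; have := s2; rewrite h expr0n /= => /eqP.
by rewrite eq_sym oppr_eq0 pnatr_eq0.
Qed.

Lemma theta2 : theta ^+ 2 = theta - 2%:R.
Proof.
apply/eqP; rewrite -subr_eq0; apply/eqP.
have -> : theta ^+ 2 - (theta - 2%:R) = (sqrt7i ^+ 2 + 7%:R) / 4%:R.
  by rewrite /theta; field.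
by rewrite s2 addNr mul0r.
Qed.

Lemma theta'2 : theta' ^+ 2 = theta' - 2%:R.
Proof.
apply/eqP; rewrite -subr_eq0; apply/eqP.
have -> : theta' ^+ 2 - (theta' - 2%:R) = theta ^+ 2 - (theta - 2%:R).
  by rewrite /theta'; ring.
by rewrite theta2 subrr.
Qed.

Lemma thth : theta * theta' = 2%:R.
Proof.
apply/eqP; rewrite -subr_eq0; apply/eqP.
have -> : theta * theta' - 2%:R = - (theta ^+ 2 - (theta - 2%:R)).
  by rewrite /theta'; ring.
by rewrite theta2 subrr oppr0.
Qed.

Lemma thdiff : theta - theta' = sqrt7i.
Proof. by rewrite /theta' /theta; field. Qed.

Lemma powS (x : algC) n : x ^+ 2 = x - 2%:R -> x ^+ n.+2 = x ^+ n.+1 - 2%:R * x ^+ n.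
Proof. move=> h; rewrite -addn2 exprD h exprS; ring. Qed.

Lemma u_cf n : theta ^+ n - theta' ^+ n = (u n)%:~R * sqrt7i.
Proof.
suff: theta ^+ n - theta' ^+ n = (u n)%:~R * sqrt7i /\
      theta ^+ n.+1 - theta' ^+ n.+1 = (u n.+1)%:~R * sqrt7i by case.
elim: n => [|n [h1 h2]]; first by rewrite /u /= !expr1 thdiff; split; [ring|ring].
split => //.
rewrite powS ?theta2 // powS ?theta'2 // uS.
rewrite intrB intrM.
have -> : ((2 : int)%:~R : algC) = 2%:R by [].
transitivity ((theta ^+ n.+1 - theta' ^+ n.+1) - 2%:R * (theta ^+ n - theta' ^+ n)); first ring.
rewrite h1 h2; ring.
Qed.

Lemma v_cf n : theta ^+ n + theta' ^+ n = (v n)%:~R.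
Proof.
suff: theta ^+ n + theta' ^+ n = (v n)%:~R /\
      theta ^+ n.+1 + theta' ^+ n.+1 = (v n.+1)%:~R by case.
elim: n => [|n [h1 h2]]; first by rewrite /v /= !expr1 /theta'; split; [ring|ring].
split => //.
rewrite powS ?theta2 // powS ?theta'2 // vS.
rewrite intrB intrM.
have -> : ((2 : int)%:~R : algC) = 2%:R by [].
transitivity ((theta ^+ n.+1 + theta' ^+ n.+1) - 2%:R * (theta ^+ n + theta' ^+ n)); first ring.
rewrite h1 h2; ring.
Qed.

Lemma uE n : ((u n)%:~R : algC) = (theta ^+ n - theta' ^+ n) / sqrt7i.
Proof. by rewrite u_cf mulfK // s_neq0. Qed.

Lemma u2E n : ((u n)%:~R : algC) ^+ 2 * 7%:R = - (theta ^+ n - theta' ^+ n) ^+ 2.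
Proof. by rewrite u_cf exprMn s2; ring. Qed.

Lemma powth n : theta ^+ n * theta' ^+ n = 2%:R ^+ n.
Proof. by rewrite -exprMn thth. Qed.

Lemma Q_E k : (((2:int) ^+ k)%:~R : algC) = theta ^+ k * theta' ^+ k.
Proof. by rewrite powth rmorphXn. Qed.

Lemma uadd m n : 2 * u (m + n) = u m * v n + u n * v m.
Proof.
apply: (@intr_inj algC).
have -> : ((2 * u (m + n))%:~R : algC) = 2%:R * (u (m+n))%:~R by ring.
have -> : ((u m * v n + u n * v m)%:~R : algC) =
   (u m)%:~R * (v n)%:~R + (u n)%:~R * (v m)%:~R by ring.
rewrite !uE -!v_cf !exprD.
have := s_neq0; move: sqrt7i => s hs.
by field.
Qed.

Lemma vdouble k : v (k + k) - 2 = 2 * (2 ^+ k - 1) - 7 * u k ^+ 2.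
Proof.
apply: (@intr_inj algC).
move: (Q_E k); set Q := (2:int) ^+ k => hQ.
have -> : ((v (k + k) - 2)%:~R : algC) = (v (k+k))%:~R - 2%:R by ring.
have -> : ((2 * (Q - 1) - 7 * u k ^+ 2)%:~R : algC) =
   2%:R * (Q%:~R - 1) - ((u k)%:~R ^+ 2 * 7%:R) by ring.
rewrite u2E -!v_cf !exprD hQ.
ring.
Qed.

Lemma u7 k : u (7 * k) = u k * 7 * ((2 ^+ k) ^+ 3 - 14 * (2 ^+ k) ^+ 2 * u k ^+ 2
   + 49 * 2 ^+ k * u k ^+ 4 - 49 * u k ^+ 6).
Proof.
apply: (@intr_inj algC).
move: (Q_E k); set Q := (2:int) ^+ k => hQ.
have -> : ((u k * 7 * (Q ^+ 3 - 14 * Q ^+ 2 * u k ^+ 2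
   + 49 * Q * u k ^+ 4 - 49 * u k ^+ 6))%:~R : algC) =
   (u k)%:~R * 7%:R * (Q%:~R ^+ 3 - 14%:R * Q%:~R ^+ 2 * (u k)%:~R ^+ 2
   + 49%:R * Q%:~R * (u k)%:~R ^+ 4 - 49%:R * (u k)%:~R ^+ 6) by ring.
rewrite hQ.
apply: (mulIf s_neq0).
rewrite -u_cf mulnC !exprM.
have hD := u2E k.
have hU := u_cf k.
move: ((u k)%:~R : algC) hD hU => U hD hU.
move: (theta ^+ k) (theta' ^+ k) => A B in hD hU *.
transitivity ((U * sqrt7i) * (7%:R * (A*B)^+3 + 14%:R * (A*B)^+2 * (- (U^+2 * 7%:R))
   + 7%:R * (A*B) * (- (U^+2 * 7%:R))^+2 + (- (U^+2 * 7%:R))^+3)); last by ring.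
rewrite -hU hD; ring.
Qed.

Lemma u_of m : 1 - 2%:R * theta = theta ^+ m - theta' ^+ m -> u m = -1.
Proof.
rewrite u_cf => h; apply: (@intr_inj algC); apply: (mulIf s_neq0).
rewrite -h -thdiff /theta' rmorphN1 mulN1r opprB; ring.
Qed.


From mathcomp Require Import zify.

Lemma cop7 (x : int) : coprimez 7 x = ~~ (7 %| x)%Z.
Proof. by rewrite coprimezE prime_coprime. Qed.

Lemma u7mod m : (7 %| u (m + 7) - 4 * u m)%Z.
Proof.
suff: (7 %| u (m + 7) - 4 * u m)%Z /\ (7 %| u (m.+1 + 7) - 4 * u m.+1)%Z by case.
elim: m => [|m [h1 h2]]; first by split.
split => //.
have -> : u (m.+2 + 7) - 4 * u m.+2 =
   (u (m.+1 + 7) - 4 * u m.+1) - 2 * (u (m + 7) - 4 * u m).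
  rewrite !addSn !uS; ring.
by rewrite rpredB // dvdz_mull.
Qed.

Lemma vmod m : (7 %| v (m + 3) - v m)%Z.
Proof.
suff: (7 %| v (m + 3) - v m)%Z /\ (7 %| v (m.+1 + 3) - v m.+1)%Z by case.
elim: m => [|m [h1 h2]]; first by split.
split => //.
have -> : v (m.+2 + 3) - v m.+2 =
   (v (m.+1 + 3) - v m.+1) - 2 * (v (m + 3) - v m).
  rewrite !addSn !vS; ring.
by rewrite rpredB // dvdz_mull.
Qed.

Lemma v_ndvd m : ~~ (7 %| v m)%Z.
Proof.
elim/ltn_ind: m => m IH.
case: (ltnP m 3) => hm.
  by case: m hm {IH} => [|[|[|]]].
have -> : m = ((m - 3) + 3)%N by rewrite subnK.
have h := vmod (m - 3).
rewrite -(subrK (v (m - 3)) (v (m - 3 + 3))).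
rewrite rpredDl //; apply: IH; lia.
Qed.

Lemma u_dvd m : (7 %| u m)%Z = (7 %| m)%N.
Proof.
elim/ltn_ind: m => m IH.
case: (ltnP m 7) => hm.
  by case: m hm {IH} => [|[|[|[|[|[|[|]]]]]]].
have -> : m = ((m - 7) + 7)%N by rewrite subnK.
have h := u7mod (m - 7).
rewrite -(subrK (4 * u (m - 7)) (u (m - 7 + 7))).
rewrite rpredDl // Gauss_dvdzr // IH; last lia.
by rewrite dvdn_addl.
Qed.

Lemma uval l r : ~~ (7 %| r)%N -> exists w, u (7 ^ l * r)%N = 7 ^+ l * w /\ coprimez 7 w.
Proof.
move=> hr; elim: l => [|l [w [hw cw]]].
  by exists (u r); rewrite expn0 mul1n expr0 mul1r cop7 u_dvd.
set k := (7 ^ l * r)%N in hw *.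
have -> : (7 ^ l.+1 * r)%N = (7 * k)%N by rewrite /k expnS mulnA.
rewrite u7 hw.
set Q := (2:int) ^+ k.
set W := (Q ^+ 3 - 14 * Q ^+ 2 * (7 ^+ l * w) ^+ 2 + 49 * Q * (7 ^+ l * w) ^+ 4 -
      49 * (7 ^+ l * w) ^+ 6).
exists (w * W); split; first by rewrite exprS; ring.
rewrite coprimezMr cw /= cop7.
have -> : W = Q ^+ 3 - 7 * (2 * Q ^+ 2 * (7 ^+ l * w) ^+ 2 - 7 * Q * (7 ^+ l * w) ^+ 4
   + 7 * (7 ^+ l * w) ^+ 6) by rewrite /W; ring.
rewrite rpredBr ?(dvdz_mulr _ (dvdzz 7)) // -cop7.
by apply: coprimezXr; apply: coprimezXr.
Qed.

Lemma pow8 l : (7 ^+ l.+1 %| 2 ^+ (3 * 7 ^ l)%N - 1)%Z.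
Proof.
elim: l => [|l IH]; first by [].
have -> : (3 * 7 ^ l.+1)%N = ((3 * 7 ^ l) * 7)%N by rewrite expnS; lia.
rewrite exprM.
move: IH; set x := (2:int) ^+ (3 * 7 ^ l)%N => /dvdzP [c hc].
have -> : x ^+ 7 - 1 = (c * 7 ^+ l.+1) *
   (7 + (x - 1) * (21 + 35 * (x - 1) + 35 * (x - 1) ^+ 2 + 21 * (x - 1) ^+ 3
     + 7 * (x - 1) ^+ 4 + (x - 1) ^+ 5)).
  rewrite -hc; ring.
rewrite [(7:int) ^+ l.+2]exprSr; apply: dvdz_mul; first exact: dvdz_mull (dvdzz _).
rewrite rpredD ?dvdzz // hc; apply: dvdz_mulr; apply: dvdz_mull.
by rewrite exprS dvdz_mulr ?dvdzz.
Qed.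

Lemma pow2k l k : (3 * 7 ^ l %| k)%N -> (7 ^+ l.+1 %| 2 ^+ k - 1)%Z.
Proof.
case/dvdnP => j ->.
rewrite mulnC exprM subrX1.
by apply: dvdz_mulr; apply: pow8.
Qed.

Lemma main_int m1 m2 : (m1 < m2)%N -> (42 %| m2 - m1)%N -> u m1 = -1 -> u m2 = -1 -> False.
Proof.
move=> hlt hd hu1 hu2.
set n := (m2 - m1)%N in hd.
have hm2 : m2 = (m1 + n)%N by rewrite /n; lia.
set k := (n %/ 2)%N.
have hn : n = (k + k)%N by rewrite /k; lia.
have k0 : (0 < k)%N by rewrite /k; lia.
have [r cr hk] := pfactor_coprime (isT : prime 7) k0.
set l := logn 7 k in hk.
have hr : ~~ (7 %| r)%N by rewrite -prime_coprime.
have h3 : (3 * 7 ^ l %| k)%N.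
  rewrite Gauss_dvd; last by rewrite coprimeXr.
  apply/andP; split; first by lia.
  by rewrite hk dvdn_mull.
have hA := uadd m1 n.
rewrite -hm2 hu2 hu1 in hA.
have hE : v n - 2 = u n * v m1 by move: hA; set a := u n * v m1; lia.
have hV := vdouble k.
rewrite -hn hE in hV.
have [w [hw cw]] := uval l r hr.
rewrite mulnC -hk in hw.
have hr2 : ~~ (7 %| 2 * r)%N by lia.
have [w' [hw' cw']] := uval l (2 * r)%N hr2.
have hn' : (7 ^ l * (2 * r))%N = n by rewrite hn hk; lia.
rewrite hn' in hw'.
have hdiv : (7 ^+ l.+1 %| u n * v m1)%Z.
  rewrite hV rpredB //.
    by apply: dvdz_mull; apply: pow2k.
  have -> : 7 * u k ^+ 2 = 7 ^+ l.+1 * (7 ^+ l * w ^+ 2) by rewrite hw [(7:int) ^+ l.+1]exprS; move: ((7:int) ^+ l) => P; ring.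
  exact: dvdz_mulr (dvdzz _).
move: hdiv; rewrite hw' exprSr -mulrA dvdz_mul2l; last by rewrite expf_neq0.
apply/negP; rewrite -cop7 coprimezMr cw' cop7 v_ndvd.
done.
Qed.

Theorem mainTheorem4 (m1 m2 : nat) :
  odd m1 -> odd m2 -> (3 <= m1)%N -> (3 <= m2)%N ->
  m1 = m2 %[mod 42] ->
  1 - 2%:R * theta = theta ^+ m1 - theta' ^+ m1 ->
  1 - 2%:R * theta = theta ^+ m2 - theta' ^+ m2 ->
  m1 = m2.
Proof.
move=> _ _ _ _ hmod /u_of h1 /u_of h2.
case: (ltngtP m1 m2) => // hlt.
  have hd : (42 %| m2 - m1)%N.
    by rewrite -(eqn_mod_dvd 42 (ltnW hlt)) hmod.
  by case: (main_int _ _ hlt hd h1 h2).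
have hd : (42 %| m1 - m2)%N.
  by rewrite -(eqn_mod_dvd 42 (ltnW hlt)) hmod.
by case: (main_int _ _ hlt hd h2 h1).
Qed.
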